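(* With $\mathrm X$, $h$, $R$, $(\mathrm U_k)$ and $R_k$ as follows, the inductive limit topology on $R=\bigcup_k R_k$ (a set $W\subseteq R$ is open iff $W\cap R_k$ is open in $R_k$ for all $k$, each $R_k$ carrying the subspace topology from $\mathbb Z\times\mathrm X\times\mathbb Z\times\mathrm X$) coincides with the subspace topology on $R$ from the product topology of $\mathbb Z\times\mathrm X\times\mathbb Z\times\mathrm X$. Here: $\mathrm X$ is the Cantor set, $\mathrm U,\mathrm V\subseteq\mathrm X$ open with $\mathrm U\neq\mathrm X$, $h:\mathrm U\to\mathrm V$ a homeomorphism, $\mathrm X_{-n}=\mathrm{dom}(h^n)$, $R=\{(r,x,s,y): x\in\mathrm X_{s-r},\ h^{r-s}(x)=y\}$; $(\mathrm U_k)_{k\ge0}$ is an increasing sequence of clopen sets with union $\mathrm U$, $\mathrm X^k_{-n}=\mathrm{dom}((h|_{\mathrm U_k})^n)$, and $R_k=\{(r,x,s,y): x\in\mathrm X^k_{s-r},\ h^{r-s}(x)=y\}$.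
   Context: $\mathbb Z$ is discrete. $\mathrm{dom}(h^n)$ denotes the domain of the $n$-fold composition of the partial bijection $h$ (for $n<0$, of $(h^{-1})^{|n|}$; $\mathrm{dom}(h^0)=\mathrm X$). It holds that $R_k\subseteq R_{k+1}$ and $R=\bigcup_kR_k$. *)

(* Defs.v *)
From Stdlib Require Import ZArith.
Open Scope Z_scope.

(** The Cantor set, realised as the Cantor space {0,1}^N with the product topology. *)
Definition X := nat -> bool.

Definition agree (n : nat) (x y : X) : Prop := forall i : nat, (i < n)%nat -> x i = y i.

(** Open subsets of X (product topology of the discrete {0,1}). *)
Definition openX (O : X -> Prop) : Prop :=
  forall x, O x -> exists n : nat, forall y, agree n x y -> O y.

Definition clopenX (O : X -> Prop) : Prop :=
  openX O /\ openX (fun x => ~ O x).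

Definition cont_on (A : X -> Prop) (f : X -> X) : Prop :=
  forall O, openX O -> exists O', openX O' /\ forall x, A x -> (O (f x) <-> O' x).

Definition homeo_UV (U V : X -> Prop) (h g : X -> X) : Prop :=
  (forall x, U x -> V (h x)) /\ (forall y, V y -> U (g y)) /\
  (forall x, U x -> g (h x) = x) /\ (forall y, V y -> h (g y) = y) /\
  cont_on U h /\ cont_on V g.

(** x in dom (f^n) for the partial map f with domain D (n : nat). *)
Definition natdom (D : X -> Prop) (f : X -> X) (n : nat) (x : X) : Prop :=
  forall i : nat, (i < n)%nat -> D (Nat.iter i f x).

(** Domain and value of the z-fold power (z : Z) of a partial bijection with domain D,
    map f, range E and inverse g; for z < 0 it is the |z|-fold power of the inverse
    (domain E, map g).  dom (f^0) = X. *)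
Definition zdom (D E : X -> Prop) (f g : X -> X) (z : Z) (x : X) : Prop :=
  if Z.leb 0 z then natdom D f (Z.to_nat z) x else natdom E g (Z.to_nat (- z)) x.

Definition zpow (f g : X -> X) (z : Z) (x : X) : X :=
  if Z.leb 0 z then Nat.iter (Z.to_nat z) f x else Nat.iter (Z.to_nat (- z)) g x.

Definition T := (Z * X * Z * X)%type.

Definition Rel (D E : X -> Prop) (f g : X -> X) (p : T) : Prop :=
  match p with
  | (r, x, s, y) => zdom D E f g (r - s) x /\ zpow f g (r - s) x = y
  end.

Definition img (h : X -> X) (A : X -> Prop) (y : X) : Prop := exists x, A x /\ h x = y.

(** Open sets of Z x X x Z x X (Z discrete, product topology). *)
Definition openT (O : T -> Prop) : Prop :=
  forall r x s y, O (r, x, s, y) ->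
    exists n : nat, forall x' y', agree n x x' -> agree n y y' -> O (r, x', s, y').

Definition open_in (S W : T -> Prop) : Prop :=
  exists O, openT O /\ forall p, (W p <-> (O p /\ S p)).

(* Main.v *)
Require Import Defs.
From Stdlib Require Import ZArith Lia Arith.

Lemma agree_mono (m n : nat) x y : (m <= n)%nat -> agree n x y -> agree m x y.
Proof. intros H A i Hi. apply A. lia. Qed.

Lemma openX_and A B : openX A -> openX B -> openX (fun x => A x /\ B x).
Proof.
  intros HA HB x [a b]. destruct (HA x a) as [n1 H1]. destruct (HB x b) as [n2 H2].
  exists (Nat.max n1 n2). intros y Hy. split.
  - apply H1. eapply agree_mono; [|exact Hy]. lia.
  - apply H2. eapply agree_mono; [|exact Hy]. lia.
Qed.

Lemma natdom_S D f n x : natdom D f (S n) x <-> D x /\ natdom D f n (f x).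
Proof.
  split.
  - intros H. split.
    + apply (H 0%nat). lia.
    + intros i Hi. rewrite <- Nat.iter_succ_r. apply H. lia.
  - intros [H1 H2] i Hi. destruct i as [|i]. exact H1.
    rewrite Nat.iter_succ_r. apply H2. lia.
Qed.

Lemma natdom_open D f : openX D -> cont_on D f -> forall n, openX (natdom D f n).
Proof.
  intros HD Hc n. induction n as [|n IH].
  - intros x _. exists 0%nat. intros y _ i Hi. lia.
  - destruct (Hc _ IH) as [O' [HO' HE]].
    intros x Hx. apply natdom_S in Hx. destruct Hx as [Dx Nx].
    assert (O' x) by (apply HE; auto).
    destruct (openX_and _ _ HD HO' x (conj Dx H)) as [m Hm].
    exists m. intros y Hy. destruct (Hm y Hy) as [Dy Oy].
    apply natdom_S. split; auto. apply HE; auto.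
Qed.

Lemma zdom_open D E f g z : openX D -> cont_on D f -> openX E -> cont_on E g ->
  openX (zdom D E f g z).
Proof.
  intros. unfold zdom. destruct (Z.leb 0 z); apply natdom_open; auto.
Qed.

Lemma cont_sub A B f : (forall x, A x -> B x) -> cont_on B f -> cont_on A f.
Proof.
  intros Hs Hc O HO. destruct (Hc O HO) as [O' [H1 H2]]. exists O'. split; auto.
Qed.

Lemma natdom_mono D D' f n x : (forall x, D x -> D' x) -> natdom D f n x -> natdom D' f n x.
Proof. intros Hs H i Hi. apply Hs, H, Hi. Qed.

Lemma zdom_mono D E D' E' f g z x : (forall x, D x -> D' x) -> (forall x, E x -> E' x) ->
  zdom D E f g z x -> zdom D' E' f g z x.
Proof. unfold zdom. intros H1 H2. destruct (Z.leb 0 z); apply natdom_mono; auto. Qed.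

Lemma fin_max (P : nat -> nat -> Prop) :
  (forall k k' i, (k <= k')%nat -> P k i -> P k' i) ->
  forall n, (forall i, (i < n)%nat -> exists k, P k i) -> exists k, forall i, (i < n)%nat -> P k i.
Proof.
  intros Hm n. induction n as [|n IH]; intros H.
  - exists 0%nat. intros; lia.
  - destruct IH as [k1 H1]. { intros i Hi. apply H. lia. }
    destruct (H n ltac:(lia)) as [k2 H2].
    exists (Nat.max k1 k2). intros i Hi.
    destruct (Nat.eq_dec i n) as [->|Hne].
    + eapply Hm; [|exact H2]. lia.
    + eapply Hm; [|apply H1]; lia.
Qed.

Theorem mainTheorem9
  (U V : X -> Prop) (h g : X -> X) (Us : nat -> X -> Prop)
  (hU : openX U) (hV : openX V) (hUX : exists x, ~ U x)
  (hh : homeo_UV U V h g)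
  (hUs_clopen : forall k, clopenX (Us k))
  (hUs_incr : forall k x, Us k x -> Us (S k) x)
  (hUs_union : forall x, U x <-> exists k, Us k x) :
  let R := Rel U V h g in
  let Rk := fun k : nat => Rel (Us k) (img h (Us k)) h g in
  forall W : T -> Prop, (forall p, W p -> R p) ->
    ((forall k : nat, open_in (Rk k) (fun p => W p /\ Rk k p)) <-> open_in R W).
Proof.
  destruct hh as [hUV [hVU [hgh [hhg [hch hcg]]]]].
  assert (UsU : forall k x, Us k x -> U x) by (intros k x H; apply hUs_union; eauto).
  assert (imgV : forall k y, img h (Us k) y -> V y).
  { intros k y [x [Hx <-]]. apply hUV. eauto. }
  assert (Usmono : forall k k' x, (k <= k')%nat -> Us k x -> Us k' x).
  { intros k k' x Hle. induction Hle; auto. }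
  assert (imgmono : forall k k' y, (k <= k')%nat -> img h (Us k) y -> img h (Us k') y).
  { intros k k' y Hle [x [Hx <-]]. exists x. split; eauto. }
  assert (imgopen : forall k, openX (img h (Us k))).
  { intros k. destruct (hcg (Us k) (proj1 (hUs_clopen k))) as [O' [HO' HE]].
    assert (Heq : forall y, img h (Us k) y <-> V y /\ O' y).
    { intros y. split.
      - intros [x [Hx <-]]. assert (V (h x)) by (apply hUV; eauto).
        split; auto. apply HE; auto. rewrite hgh; eauto.
      - intros [Vy Oy]. exists (g y). split; auto. apply HE; auto. }
    intros y Hy. apply Heq in Hy.
    destruct (openX_and _ _ hV HO' y Hy) as [m Hm]. exists m. intros z Hz.
    apply Heq, Hm, Hz. }
  assert (Dopen : forall k z, openX (zdom (Us k) (img h (Us k)) h g z)).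
  { intros k z. apply zdom_open.
    - apply hUs_clopen.
    - eapply cont_sub; [|exact hch]. eauto.
    - apply imgopen.
    - eapply cont_sub; [|exact hcg]. eauto. }
  intros R Rk W HW. split.
  - intros Hk.
    assert (HO : forall k, exists O, openT O /\
              forall p, ((W p /\ Rk k p) <-> (O p /\ Rk k p))) by (intros k; apply Hk).
    set (Dk := fun k (q : T) => match q with (r, x, s, y) =>
                 zdom (Us k) (img h (Us k)) h g (r - s) x end).
    exists (fun q => exists k, (exists O, openT O /\
              (forall p, ((W p /\ Rk k p) <-> (O p /\ Rk k p))) /\ O q) /\ Dk k q).
    split.
    + intros r x s y [k [[O [HOo [HOe HOq]]] HD]].
      destruct (HOo r x s y HOq) as [n1 H1].
      destruct (Dopen k (r - s)%Z x HD) as [n2 H2].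
      exists (Nat.max n1 n2). intros x' y' Ax Ay. exists k. split.
      * exists O. split; [exact HOo|]. split; [exact HOe|].
        apply H1; eapply agree_mono; try eassumption; lia.
      * simpl. apply H2. eapply agree_mono; [|exact Ax]. lia.
    + intros p. split.
      * intros Wp. split; [|apply HW, Wp].
        assert (Hex : exists k, Rk k p).
        { destruct p as [[[r x] s] y]. destruct (HW _ Wp) as [Hz Hp].
          unfold Rk, Rel.
          unfold zdom in Hz |- *. destruct (Z.leb 0 (r - s)).
          - destruct (fin_max (fun k i => Us k (Nat.iter i h x))
                      (fun k k' i Hle Hp => Usmono k k' _ Hle Hp) _ (fun i Hi => proj1 (hUs_union _) (Hz i Hi)))
              as [k Hk']. exists k. split; auto.
          - assert (H' : forall i, (i < Z.to_nat (- (r - s)))%nat ->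
                      exists k, img h (Us k) (Nat.iter i g x)).
            { intros i Hi. specialize (Hz i Hi).
              destruct (proj1 (hUs_union _) (hVU _ Hz)) as [k Hk2].
              exists k. exists (g (Nat.iter i g x)). split; auto. }
            destruct (fin_max (fun k i => img h (Us k) (Nat.iter i g x))
                      (fun k k' i Hle Hp => imgmono k k' _ Hle Hp) _ H') as [k Hk']. exists k. split; auto. }
        destruct Hex as [k Hkp]. exists k. split.
        -- destruct (HO k) as [O [HOo HOe]]. exists O. split; auto. split; auto.
           apply (HOe p). auto.
        -- destruct p as [[[r x] s] y]. apply Hkp.
      * intros [[k [[O [HOo [HOe HOq]]] HD]] Rp].
        assert (Rkp : Rk k p).
        { destruct p as [[[r x] s] y]. split; [exact HD|apply Rp]. }
        apply (HOe p). auto.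
  - intros [O [HOo HOe]] k. exists O. split; auto. intros p. split.
    + intros [Wp Rkp]. split; auto. apply HOe, Wp.
    + intros [Op Rkp]. split; auto. apply HOe. split; auto.
      destruct p as [[[r x] s] y]. destruct Rkp as [Hz Hp]. split; auto.
      eapply zdom_mono; [| |exact Hz]; eauto.
Qed.
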